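(* For every integer $m\geq 3$ there exists a $2$-quasigroup $\psi$ of order $2m+1$ on $\Sigma=\{0,1,\dots,2m\}$ such that for each $i\in\{0,\dots,m-1\}$, $\psi$ has $m$ $\{2i,2i+1\}$-components, and all of these $\{2i,2i+1\}$-components except one have the form $\{2j,2j+1\}\times\{2l,2l+1\}$ for some $j,l\in\{0,\dots,m-1\}$.
   Context: A $2$-quasigroup (binary quasigroup) of order $k$ on $\Sigma$, $|\Sigma|=k$, is a function $f:\Sigma^2\to\Sigma$ such that fixing either argument yields a bijection $\Sigma\to\Sigma$ in the other. For distinct $a,b\in\Sigma$, an $\{a,b\}$-component of an $n$-ary quasigroup $f:\Sigma^n\to\Sigma$ is a set $S\subset\Sigma^n$ such that (1) $f(S)=\{a,b\}$, and (2) the function obtained from $f$ by replacing the value $a$ by $b$ and $b$ by $a$ at all points of $S$ (and leaving $f$ unchanged outside $S$) is again an $n$-ary quasigroup. *)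

(* Defs.v *)
From mathcomp Require Import all_boot.
Set Implicit Arguments. Unset Strict Implicit. Unset Printing Implicit Defensive.

Definition binop (k : nat) := 'I_k -> 'I_k -> 'I_k.

(* 2-quasigroup: fixing either argument gives a bijection 'I_k -> 'I_k
   (for an endofunction of a finite type, injective <-> bijective). *)
Definition is_quasigroup (k : nat) (f : binop k) : bool :=
  [forall x, injectiveb (f x)] && [forall y, injectiveb (fun x => f x y)].

Definition switch (k : nat) (f : binop k) (a b : 'I_k) (S : {set 'I_k * 'I_k})
  : binop k :=
  fun x y =>
    if (x, y) \in S then
      (if f x y == a then b else if f x y == b then a else f x y)
    else f x y.

Definition is_component (k : nat) (f : binop k) (a b : 'I_k)
  (S : {set 'I_k * 'I_k}) : bool :=
  ([set f p.1 p.2 | p in S] == [set a; b]) && is_quasigroup (switch f a b S).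

Definition is_min_component (k : nat) (f : binop k) (a b : 'I_k)
  (S : {set 'I_k * 'I_k}) : bool :=
  is_component f a b S &&
  [forall T : {set 'I_k * 'I_k}, (T \proper S) ==> ~~ is_component f a b T].

Definition components (k : nat) (f : binop k) (a b : 'I_k)
  : {set {set 'I_k * 'I_k}} :=
  [set S | is_min_component f a b S].

Definition pairset (m : nat) (j : nat) : {set 'I_(2 * m).+1} :=
  [set inord (2 * j); inord (2 * j + 1)].

Definition is_block (m : nat) (S : {set 'I_(2 * m).+1 * 'I_(2 * m).+1}) : Prop :=
  exists (j l : 'I_m), S = setX (pairset m j) (pairset m l).

(* Main.v *)
Require Import Defs.
From mathcomp Require Import all_boot.
From mathcomp Require Import zify.
Set Implicit Arguments. Unset Strict Implicit. Unset Printing Implicit Defensive.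

Definition sw (k : nat) (a b u : 'I_k) := if u == a then b else if u == b then a else u.

Lemma switchE k (f : binop k) a b S x y :
  switch f a b S x y = if (x, y) \in S then sw a b (f x y) else f x y.
Proof. by []. Qed.

Lemma swK k (a b : 'I_k) : a != b -> cancel (sw a b) (sw a b).
Proof.
move=> nab u; rewrite /sw.
case: (eqVneq u a) => [->|ua]; first by rewrite eqxx eq_sym (negbTE nab).
case: (eqVneq u b) => [->|ub]; first by rewrite eqxx.
by rewrite (negbTE ua) (negbTE ub).
Qed.

Lemma sw_inj k (a b : 'I_k) : a != b -> injective (sw a b).
Proof. by move=> nab; apply: can_inj (swK nab). Qed.

Lemma sw_ab k (a b u : 'I_k) : u \in [set a; b] -> sw a b u \in [set a; b].
Proof.
rewrite /sw !inE; case: (eqVneq u a) => [_|_] /=; first by rewrite eqxx orbT.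
by case: (eqVneq u b) => //= _ _; rewrite eqxx.
Qed.

Lemma comp_img k (f : binop k) a b S p :
  is_component f a b S -> p \in S -> f p.1 p.2 \in [set a; b].
Proof.
by move=> /andP[/eqP <- _] Hp; apply/imsetP; exists p.
Qed.

Lemma comp_nonempty k (f : binop k) a b S :
  is_component f a b S -> exists2 p, p \in S & f p.1 p.2 \in [set a; b].
Proof.
move=> Hc; move: (Hc) => /andP[/eqP Himg _].
have : a \in [set a; b] by rewrite !inE eqxx.
rewrite -{1}Himg => /imsetP[p Hp _]; exists p => //; exact: comp_img Hc Hp.
Qed.

Lemma closure_row k (f : binop k) a b S x y y' :
  is_quasigroup f -> is_component f a b S -> (x, y) \in S ->
  f x y' \in [set a; b] -> (x, y') \in S.
Proof.
move=> /andP[/forallP Hr _] Hc Hxy Hy'.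
move: (Hc) => /andP[_ /andP[/forallP Hsr _]].
have Hfxy := comp_img Hc Hxy.
apply/negPn/negP => Hn.
have Hneq : y != y' by apply/eqP => E; rewrite -E Hxy in Hn.
have Hf : f x y != f x y' by apply: contra Hneq => /eqP E; apply/eqP; exact: (injectiveP _ (Hr x)).
move/negP: Hneq; apply; apply/eqP; apply: (injectiveP _ (Hsr x)).
rewrite !switchE Hxy (negbTE Hn) /sw.
move: Hfxy Hy' Hf; rewrite !inE.
by case/orP=> /eqP->; case/orP=> /eqP->; rewrite ?eqxx //=; case: eqP.
Qed.

Lemma closure_col k (f : binop k) a b S x x' y :
  is_quasigroup f -> is_component f a b S -> (x, y) \in S ->
  f x' y \in [set a; b] -> (x', y) \in S.
Proof.
move=> /andP[_ /forallP Hr] Hc Hxy Hy'.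
move: (Hc) => /andP[_ /andP[_ /forallP Hsr]].
have Hfxy := comp_img Hc Hxy.
apply/negPn/negP => Hn.
have Hneq : x != x' by apply/eqP => E; rewrite -E Hxy in Hn.
have Hf : f x y != f x' y by apply: contra Hneq => /eqP E; apply/eqP; exact: (injectiveP _ (Hr y)).
move/negP: Hneq; apply; apply/eqP; apply: (injectiveP _ (Hsr y)) => /=.
rewrite !switchE Hxy (negbTE Hn) /sw.
move: Hfxy Hy' Hf; rewrite !inE.
by case/orP=> /eqP->; case/orP=> /eqP->; rewrite ?eqxx //=; case: eqP.
Qed.

Lemma piece_comp k (f : binop k) a b (P : {set 'I_k * 'I_k}) :
  is_quasigroup f -> a != b ->
  (forall p, p \in P -> f p.1 p.2 \in [set a; b]) ->
  (forall x y y', (x, y) \in P -> f x y' \in [set a; b] -> (x, y') \in P) ->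
  (forall x x' y, (x, y) \in P -> f x' y \in [set a; b] -> (x', y) \in P) ->
  (exists2 p, p \in P & f p.1 p.2 = a) -> (exists2 p, p \in P & f p.1 p.2 = b) ->
  is_component f a b P.
Proof.
move=> /andP[/forallP Hr /forallP Hc] nab HD Hrow Hcol [pa Pa Ea] [pb Pb Eb].
apply/andP; split.
  apply/eqP/setP => c; apply/imsetP/idP.
    by case=> p Hp ->; exact: HD.
  rewrite !inE => /orP[] /eqP ->; [exists pa | exists pb] => //.
apply/andP; split; apply/forallP => x; apply/injectiveP.
  move=> y1 y2; rewrite !switchE.
  case H1: ((x, y1) \in P); case H2: ((x, y2) \in P).
  - by move/(sw_inj nab); apply: (injectiveP _ (Hr x)).
  - move=> E; have := sw_ab (HD _ H1); rewrite E /= => /(Hrow _ _ _ H1).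
    by rewrite H2.
  - move=> E; have := sw_ab (HD _ H2); rewrite -E /= => /(Hrow _ _ _ H2).
    by rewrite H1.
  - by apply: (injectiveP _ (Hr x)).
move=> y1 y2; rewrite /= !switchE.
case H1: ((y1, x) \in P); case H2: ((y2, x) \in P).
- by move/(sw_inj nab); apply: (injectiveP _ (Hc x)).
- move=> E; have := sw_ab (HD _ H1); rewrite E /= => /(Hcol _ _ _ H1).
  by rewrite H2.
- move=> E; have := sw_ab (HD _ H2); rewrite -E /= => /(Hcol _ _ _ H2).
  by rewrite H1.
- by apply: (injectiveP _ (Hc x)).
Qed.

Lemma min_comp k (f : binop k) a b P :
  is_component f a b P ->
  (forall S, is_component f a b S -> forall p, p \in S -> p \in P -> P \subset S) ->
  is_min_component f a b P.
Proof.
move=> HP Hconn; rewrite /is_min_component HP /=.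
apply/forallP => T; apply/implyP => HT; apply/negP => HcT.
have [p HpT _] := comp_nonempty HcT.
have sTP := proper_sub HT.
have := Hconn T HcT p HpT (subsetP sTP p HpT).
by move: HT; rewrite properE => /andP[_ /negP].
Qed.

Lemma comps_eq k (f : binop k) a b (m : nat) (piece : nat -> {set 'I_k * 'I_k}) :
  (forall j, j < m -> is_component f a b (piece j)) ->
  (forall j, j < m -> forall S, is_component f a b S -> forall p, p \in S ->
      p \in piece j -> piece j \subset S) ->
  (forall p, f p.1 p.2 \in [set a; b] -> exists2 j, j < m & p \in piece j) ->
  components f a b = [set piece (nat_of_ord j) | j : 'I_m].
Proof.
move=> Hcomp Hconn Hcov; apply/setP => S; rewrite inE; apply/idP/imsetP.
  move=> /andP[HS /forallP Hmin].
  have [p HpS HpD] := comp_nonempty HS.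
  have [j Hj Hpj] := Hcov p HpD.
  exists (Ordinal Hj) => //=.
  have Hsub := Hconn j Hj S HS p HpS Hpj.
  have := Hmin (piece j); rewrite (Hcomp j Hj) implybF.
  by rewrite properEneq Hsub andbT negbK => /eqP.
case=> j _ ->; apply: min_comp; first exact: Hcomp.
exact: Hconn.
Qed.

Definition md n a := if a < n then a else a - n.

Lemma mdP n a : a < 2 * n -> (a < n /\ md n a = a) \/ (n <= a /\ md n a = a - n).
Proof. rewrite /md; case: ifP => H; lia. Qed.

Definition Lodd m j l := md m (j + l).

Definition Leven n j l :=
  if j < n then (if l < n then (if j == md n (l + 1) then n else md n (j + l + 1))
                 else md n (2 * j))
  else (if l < n then md n (2 * md n (l + 1)) else n).

Ltac mds := (match goal with |- ?g => have GG : g = g by [] end);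
  repeat match goal with
  | H : context [md ?n ?a] |- _ =>
    lazymatch goal with
    | _ : is_true (a < 2 * n) -> _ |- _ => fail
    | _ => have := @mdP n a; move=> ?
    end
  end.

Section Odd.
Variables (m k : nat).
Hypothesis Hm : m = 2 * k + 1.

Lemma Lodd_r j l : j < m -> l < m -> Lodd m j l < m.
Proof. move=> Hj Hl; rewrite /Lodd; mds; lia. Qed.
Lemma Lodd_row j l1 l2 : j < m -> l1 < m -> l2 < m -> Lodd m j l1 = Lodd m j l2 -> l1 = l2.
Proof. move=> Hj Hl1 Hl2; rewrite /Lodd; mds; lia. Qed.
Lemma Lodd_col j1 j2 l : j1 < m -> j2 < m -> l < m -> Lodd m j1 l = Lodd m j2 l -> j1 = j2.
Proof. move=> Hj Hl1 Hl2; rewrite /Lodd; mds; lia. Qed.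
Lemma Lodd_d j1 j2 : j1 < m -> j2 < m -> Lodd m j1 j1 = Lodd m j2 j2 -> j1 = j2.
Proof. move=> Hj Hl1; rewrite /Lodd; mds; lia. Qed.
End Odd.

Section Even.
Variables (n k : nat).
Hypothesis Hn : n = 2 * k + 1.
Hypothesis Hk : 0 < k.

Ltac ev := rewrite /Leven; repeat (let H := fresh "H" in case: ifP => H); mds; lia.

Lemma Leven_r j l : j < n.+1 -> l < n.+1 -> Leven n j l < n.+1.
Proof. move=> Hj Hl; ev. Qed.
Lemma Leven_row j l1 l2 : j < n.+1 -> l1 < n.+1 -> l2 < n.+1 -> Leven n j l1 = Leven n j l2 -> l1 = l2.
Proof. move=> Hj Hl1 Hl2; ev. Qed.
Lemma Leven_col j1 j2 l : j1 < n.+1 -> j2 < n.+1 -> l < n.+1 -> Leven n j1 l = Leven n j2 l -> j1 = j2.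
Proof. move=> Hj Hl1 Hl2; ev. Qed.
Lemma Leven_d j1 j2 : j1 < n.+1 -> j2 < n.+1 -> Leven n j1 j1 = Leven n j2 j2 -> j1 = j2.
Proof. move=> Hj Hl1; ev. Qed.
End Even.

Section Psi.
Variables (m : nat) (Ln : nat -> nat -> nat).
Hypothesis HLr : forall j l, j < m -> l < m -> Ln j l < m.
Hypothesis HLrow : forall j l1 l2, j < m -> l1 < m -> l2 < m -> Ln j l1 = Ln j l2 -> l1 = l2.
Hypothesis HLcol : forall j1 j2 l, j1 < m -> j2 < m -> l < m -> Ln j1 l = Ln j2 l -> j1 = j2.
Hypothesis HLd : forall j1 j2, j1 < m -> j2 < m -> Ln j1 j1 = Ln j2 j2 -> j1 = j2.

Ltac Lfacts :=
  repeat match goal with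
  | H : context [Ln ?a ?b] |- _ =>
      lazymatch goal with
      | _ : is_true (Ln a b < m) |- _ => fail
      | _ => have : Ln a b < m by apply: HLr; lia
      end; move=> ?
  | H1 : context [Ln ?a ?b], H2 : context [Ln ?a ?c] |- _ =>
      tryif constr_eq b c then fail else
      lazymatch goal with
      | _ : Ln a b = Ln a c -> b = c |- _ => fail
      | _ => have : Ln a b = Ln a c -> b = c by apply: HLrow; lia
      end; move=> ?
  | H1 : context [Ln ?b ?a], H2 : context [Ln ?c ?a] |- _ =>
      tryif constr_eq b c then fail else
      lazymatch goal with
      | _ : Ln b a = Ln c a -> b = c |- _ => fail
      | _ => have : Ln b a = Ln c a -> b = c by apply: HLcol; lia
      end; move=> ?
  | H1 : context [Ln ?b ?b], H2 : context [Ln ?c ?c] |- _ =>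
      tryif constr_eq b c then fail else
      lazymatch goal with
      | _ : Ln b b = Ln c c -> b = c |- _ => fail
      | _ => have : Ln b b = Ln c c -> b = c by apply: HLd; lia
      end; move=> ?
  end.

Definition psin x y :=
  if x < 2 * m then
    if y < 2 * m then
      if x %/ 2 == y %/ 2 then
        (if x %% 2 == y %% 2 then 2 * m else 2 * Ln (x %/ 2) (x %/ 2) + x %% 2)
      else 2 * Ln (x %/ 2) (y %/ 2) + (x %% 2 + y %% 2) %% 2
    else 2 * Ln (x %/ 2) (x %/ 2) + (1 - x %% 2)
  else if y < 2 * m then 2 * Ln (y %/ 2) (y %/ 2) + y %% 2 else 2 * m.

Lemma cellP x : x <= 2 * m -> x = 2 * m \/ exists j s, [/\ j < m, s < 2 & x = 2 * j + s].
Proof.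
case: (ltnP x (2 * m)) => H Hx; last by left; lia.
by right; exists (x %/ 2), (x %% 2); split; lia.
Qed.

Lemma psinE j s l t : j < m -> s < 2 -> l < m -> t < 2 ->
  psin (2 * j + s) (2 * l + t) =
  if j == l then (if s == t then 2 * m else 2 * Ln j j + s) else 2 * Ln j l + (s + t) %% 2.
Proof.
move=> Hj Hs Hl Ht; rewrite /psin.
have -> : (2 * j + s < 2 * m) = true by lia.
have -> : (2 * l + t < 2 * m) = true by lia.
have -> : (2 * j + s) %/ 2 = j by lia.
have -> : (2 * l + t) %/ 2 = l by lia.
have -> : (2 * j + s) %% 2 = s by lia.
by have -> : (2 * l + t) %% 2 = t by lia.
Qed.

Lemma psinE2 j s : j < m -> s < 2 -> psin (2 * j + s) (2 * m) = 2 * Ln j j + (1 - s).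
Proof.
move=> Hj Hs; rewrite /psin.
have -> : (2 * j + s < 2 * m) = true by lia.
rewrite ltnn.
have -> : (2 * j + s) %/ 2 = j by lia.
by have -> : (2 * j + s) %% 2 = s by lia.
Qed.

Lemma psinE3 l t : l < m -> t < 2 -> psin (2 * m) (2 * l + t) = 2 * Ln l l + t.
Proof.
move=> Hj Hs; rewrite /psin ltnn.
have -> : (2 * l + t < 2 * m) = true by lia.
have -> : (2 * l + t) %/ 2 = l by lia.
by have -> : (2 * l + t) %% 2 = t by lia.
Qed.

Lemma psinE4 : psin (2 * m) (2 * m) = 2 * m.
Proof. by rewrite /psin ltnn. Qed.

Ltac Lcong :=
  repeat match goal with
  | H1 : context [Ln ?a ?b], H2 : context [Ln ?c ?d] |- _ =>
      tryif (constr_eq a c; constr_eq b d) then fail else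
      lazymatch goal with
      | _ : a = c -> b = d -> Ln a b = Ln c d |- _ => fail
      | _ => have : a = c -> b = d -> Ln a b = Ln c d by move=> ? ?; apply: f_equal2
      end; move=> ?
  end.

Ltac cells :=
  repeat match goal with
  | H : is_true (?x <= 2 * m) |- _ =>
      case/cellP: H => [->|[? [? [? ? ->]]]]
  end;
  rewrite ?psinE ?psinE2 ?psinE3 ?psinE4 //.

Ltac finish := repeat (case: eqP => ?; subst);
  (match goal with |- ?g => have GG : g = g by [] end); Lfacts; lia.

Lemma psin_lt x y : x <= 2 * m -> y <= 2 * m -> psin x y <= 2 * m.
Proof. move=> Hx Hy; cells; finish. Qed.

Lemma psin_rinj x y1 y2 : x <= 2 * m -> y1 <= 2 * m -> y2 <= 2 * m ->
  psin x y1 = psin x y2 -> y1 = y2.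
Proof. move=> Hx Hy1 Hy2; cells; finish. Qed.

Lemma psin_cinj x1 x2 y : x1 <= 2 * m -> x2 <= 2 * m -> y <= 2 * m ->
  psin x1 y = psin x2 y -> x1 = x2.
Proof. move=> Hx Hy1 Hy2; cells; finish. Qed.


Variables (i j0 : nat).
Hypotheses (Hi : i < m) (Hj0 : j0 < m) (Hij0 : Ln j0 j0 = i).

Definition inH x y := [|| (x == 2 * j0) && (y == 2 * j0 + 1),
  (x == 2 * j0 + 1) && (y == 2 * j0),
  ((x == 2 * j0) || (x == 2 * j0 + 1)) && (y == 2 * m) |
  (x == 2 * m) && ((y == 2 * j0) || (y == 2 * j0 + 1))].

Definition inP j x y := if j == j0 then inH x y else
  [&& x < 2 * m, y < 2 * m, x %/ 2 == j & Ln j (y %/ 2) == i].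

Definition isab v := (v == 2 * i) || (v == 2 * i + 1).

Definition cov x := if x < 2 * m then x %/ 2 else j0.

Ltac divs := repeat match goal with
  | |- context [(2 * ?l + ?t) %/ 2] => rewrite (_ : (2 * l + t) %/ 2 = l); last lia
  | |- context [(2 * ?l) %/ 2] => rewrite (_ : (2 * l) %/ 2 = l); last lia
  end.

Lemma covE j s : j < m -> s < 2 -> cov (2 * j + s) = j.
Proof. by move=> Hj Hs; rewrite /cov; case: ifP => ?; lia. Qed.

Lemma covE2 : cov (2 * m) = j0.
Proof. by rewrite /cov ltnn. Qed.

Lemma colX a b c d : a < m -> b < m -> c < m -> d < m -> b = d -> Ln a b = Ln c d -> a = c.
Proof. move=> ? ? ? ? E; rewrite E; apply: HLcol => //. Qed.

Lemma rowX a b c d : a < m -> b < m -> c < m -> d < m -> a = c -> Ln a b = Ln c d -> b = d.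
Proof. move=> ? ? ? ? E; rewrite E; apply: HLrow => //. Qed.

Ltac Lfacts2 :=
  repeat match goal with
  | H : context [Ln ?a ?b] |- _ =>
      lazymatch goal with
      | _ : is_true (Ln a b < m) |- _ => fail
      | _ => have : Ln a b < m by apply: HLr; lia
      end; move=> ?
  | H1 : context [Ln ?a ?b], H2 : context [Ln ?c ?d] |- _ =>
      tryif (constr_eq a c; constr_eq b d) then fail else
      lazymatch goal with
      | _ : b = d -> Ln a b = Ln c d -> a = c |- _ => fail
      | _ => have : b = d -> Ln a b = Ln c d -> a = c by apply: colX; lia
      end; move=> ?;
      have : a = c -> Ln a b = Ln c d -> b = d by apply: rowX; lia
  end.

Ltac finish2 t := rewrite ?covE ?covE2 //; rewrite /inP /inH /isab; divs;
  repeat (let H := fresh "Hc" in case: ifP => H; try (move/eqP: H => H; subst)); divs;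
  (match goal with |- ?g => have GG : g = g by [] end); t; lia.

Lemma covl x y : x <= 2 * m -> y <= 2 * m -> isab (psin x y) -> inP (cov x) x y.
Proof. move=> Hx Hy; cells; finish2 ltac:(Lfacts; Lcong). Qed.


Lemma rowu j j' x y y' : j < m -> j' < m -> x <= 2 * m -> y <= 2 * m -> y' <= 2 * m ->
  inP j x y -> inP j' x y' -> j = j'.
Proof. move=> Hj Hj' Hx Hy Hy'; cells; finish2 idtac. Qed.

Lemma colu j j' x x' y : j < m -> j' < m -> x <= 2 * m -> x' <= 2 * m -> y <= 2 * m ->
  inP j x y -> inP j' x' y -> j = j'.
Proof.
move=> Hj Hj' Hx Hx' Hy; rewrite /inP.
case: (eqVneq j j0) => [->|nj]; case: (eqVneq j' j0) => [->|nj'] //.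
- move=> HH /and4P[_ Hy2 _ /eqP E].
  have Ey : y %/ 2 = j0 by move: HH; rewrite /inH; lia.
  rewrite Ey in E; have : j' = j0 by apply: (@HLcol _ _ j0) => //; rewrite E Hij0.
  by move/eqP: nj'.
- move=> /and4P[_ Hy2 _ /eqP E] HH.
  have Ey : y %/ 2 = j0 by move: HH; rewrite /inH; lia.
  rewrite Ey in E; have : j = j0 by apply: (@HLcol _ _ j0) => //; rewrite E Hij0.
  by move/eqP: nj.
- move=> /and4P[_ Hy2 _ /eqP E1] /and4P[_ _ _ /eqP E2].
  apply: (@HLcol _ _ (y %/ 2)) => //; first lia.
  by rewrite E1 E2.
Qed.

Lemma Hv1 : psin (2 * j0) (2 * j0 + 1) = 2 * i.
Proof. rewrite -{1}[2 * j0]addn0 psinE // eqxx /=; lia. Qed.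
Lemma Hv2 : psin (2 * j0) (2 * m) = 2 * i + 1.
Proof. rewrite -[2 * j0]addn0 psinE2 //; lia. Qed.
Lemma Hv3 : psin (2 * j0 + 1) (2 * m) = 2 * i.
Proof. rewrite psinE2 //; lia. Qed.
Lemma Hv4 : psin (2 * j0 + 1) (2 * j0) = 2 * i + 1.
Proof. rewrite -{2}[2 * j0]addn0 psinE // eqxx /=; lia. Qed.
Lemma Hv5 : psin (2 * m) (2 * j0) = 2 * i.
Proof. rewrite -[2 * j0]addn0 psinE3 //; lia. Qed.
Lemma Hv6 : psin (2 * m) (2 * j0 + 1) = 2 * i + 1.
Proof. rewrite psinE3 //; lia. Qed.

Lemma inD j x y : j < m -> x <= 2 * m -> y <= 2 * m -> inP j x y -> isab (psin x y).
Proof.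
move=> Hj Hx Hy; rewrite /inP; case: (eqVneq j j0) => [_|nj].
  rewrite /inH /isab => /or4P[/andP[/eqP-> /eqP->]|/andP[/eqP-> /eqP->]
    |/andP[/orP[]/eqP-> /eqP->]|/andP[/eqP-> /orP[]/eqP->]];
  rewrite ?Hv1 ?Hv2 ?Hv3 ?Hv4 ?Hv5 ?Hv6 eqxx ?orbT //.
move=> /and4P[Hx2 Hy2 /eqP Ex /eqP Ey].
have -> : x = 2 * j + x %% 2 by lia.
have -> : y = 2 * (y %/ 2) + y %% 2 by lia.
rewrite psinE; try lia.
case: eqP => [E|_].
  have : j = j0 by apply: HLd => //; rewrite Hij0 -Ey -E.
  by move/eqP: nj.
rewrite /isab Ey; apply/orP; case: (ltnP ((x %% 2 + y %% 2) %% 2) 1) => ?; [left|right]; apply/eqP; lia.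
Qed.

Lemma rect j x y x' y' : j < m -> j != j0 -> inP j x y -> inP j x' y' -> inP j x y'.
Proof. by move=> Hj /negbTE Hn; rewrite /inP Hn => /and4P[? ? ? ?] /and4P[? ? ? ?]; apply/and4P. Qed.

Lemma pieceab j : j < m -> (exists l, l < m /\ Ln j l = i) ->
  exists xa ya xb yb, [/\ [/\ xa <= 2 * m, ya <= 2 * m, xb <= 2 * m & yb <= 2 * m],
    inP j xa ya, psin xa ya = 2 * i, inP j xb yb & psin xb yb = 2 * i + 1].
Proof.
move=> Hj [l [Hl Hjl]]; case: (eqVneq j j0) => [->|nj].
  exists (2 * j0), (2 * j0 + 1), (2 * j0), (2 * m); split; rewrite ?Hv1 ?Hv2 //;
  first (split; lia); by rewrite /inP ?eqxx /inH ?eqxx /= ?orbT.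
exists (2 * j + 0), (2 * l + 0), (2 * j + 0), (2 * l + 1).
have jl : (j == l) = false.
  apply/eqP => E; subst l; have : j = j0 by apply: HLd => //; rewrite Hij0.
  by move/eqP: nj.
split; rewrite ?psinE // ?jl ?Hjl //; try lia; try (split; lia).
all: rewrite /inP (negbTE nj); divs; rewrite Hjl; apply/and4P; split => //; lia.
Qed.

Lemma blockE j l x y : j < m -> j != j0 -> l < m -> Ln j l = i ->
  inP j x y = (x %/ 2 == j) && (y %/ 2 == l).
Proof.
move=> Hj nj Hl Hjl; rewrite /inP (negbTE nj); apply/idP/idP.
  move=> /and4P[Hx Hy /eqP Ex /eqP Ey]; rewrite Ex eqxx /=; apply/eqP.
  apply: (HLrow (j := j)) => //; first lia.
  by rewrite Ey Hjl.
move=> /andP[/eqP Ex /eqP Ey]; rewrite Ey Hjl Ex !eqxx !andbT; apply/andP; split; lia.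
Qed.

End Psi.

Lemma nat_surj m (f : nat -> nat) : (forall x, x < m -> f x < m) ->
  (forall x y, x < m -> y < m -> f x = f y -> x = y) ->
  forall z, z < m -> exists x, x < m /\ f x = z.
Proof.
move=> Hr Hi z Hz.
pose F : 'I_m -> 'I_m := fun x => Ordinal (Hr _ (ltn_ord x)).
have injF : injective F.
  by move=> x y /(congr1 val) /= /Hi E; apply: val_inj; apply: E.
have := inj_card_onto injF (leqnn _) (Ordinal Hz).
case/codomP => x /(congr1 val) /= E; exists x; split => //.
Qed.

Section Main.
Variables (m : nat) (Ln : nat -> nat -> nat).
Hypothesis HLr : forall j l, j < m -> l < m -> Ln j l < m.
Hypothesis HLrow : forall j l1 l2, j < m -> l1 < m -> l2 < m -> Ln j l1 = Ln j l2 -> l1 = l2.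
Hypothesis HLcol : forall j1 j2 l, j1 < m -> j2 < m -> l < m -> Ln j1 l = Ln j2 l -> j1 = j2.
Hypothesis HLd : forall j1 j2, j1 < m -> j2 < m -> Ln j1 j1 = Ln j2 j2 -> j1 = j2.

Local Notation N := (2 * m).+1.

Definition psi : binop N := fun x y => inord (psin m Ln x y).

Lemma ltN (x : 'I_N) : x <= 2 * m.
Proof. by rewrite -ltnS ltn_ord. Qed.

Lemma psiE x y : nat_of_ord (psi x y) = psin m Ln x y.
Proof. by rewrite /psi inordK // ltnS (psin_lt HLr) // ltN. Qed.

Lemma psi_q : is_quasigroup psi.
Proof.
apply/andP; split; apply/forallP => x; apply/injectiveP => y1 y2 /(congr1 val);
  rewrite /= !psiE => E; apply: val_inj.
  exact: (psin_rinj HLr HLrow HLd (ltN x) (ltN y1) (ltN y2) E).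
exact: (psin_cinj HLr HLcol HLd (ltN y1) (ltN y2) (ltN x) E).
Qed.

Lemma ordE (x : 'I_N) k : k <= 2 * m -> val x = k -> x = inord k.
Proof. by move=> Hk E; apply: val_inj; rewrite /= inordK // E. Qed.

Section Pair.
Variables (i j0 : nat).
Hypotheses (Hi : i < m) (Hj0 : j0 < m) (Hij0 : Ln j0 j0 = i).

Let a : 'I_N := inord (2 * i).
Let b : 'I_N := inord (2 * i + 1).

Definition piece (j : nat) : {set 'I_N * 'I_N} := [set p : 'I_N * 'I_N | inP m Ln i j0 j p.1 p.2].

Lemma memD x y : (psi x y \in [set a; b]) = isab i (psin m Ln x y).
Proof. by rewrite !inE /isab -!val_eqE /= psiE !inordK //; lia. Qed.

Lemma nab : a != b.
Proof. by rewrite -val_eqE /= !inordK //; lia. Qed.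

Lemma rowsurj j : j < m -> exists l, l < m /\ Ln j l = i.
Proof.
move=> Hj; apply: (@nat_surj m (Ln j)) => //.
- by move=> x Hx; apply: HLr.
- by move=> x y Hx Hy; apply: HLrow.
Qed.

Lemma covlt x : cov m j0 x < m.
Proof. by rewrite /cov; case: ifP => H; lia. Qed.

Lemma pieceD j : j < m -> forall p, p \in piece j -> psi p.1 p.2 \in [set a; b].
Proof.
move=> Hj [x y]; rewrite inE /= => H; rewrite (memD x y).
exact: (inD HLd Hi Hj0 Hij0 Hj (ltN x) (ltN y) H).
Qed.

Lemma piece_isc j : j < m -> is_component psi a b (piece j).
Proof.
move=> Hj; apply: piece_comp psi_q nab (pieceD Hj) _ _ _ _.
- move=> x y y'; rewrite memD !inE /= => H HD.
  have Hc := covl HLr HLrow HLcol HLd Hi Hj0 Hij0 (ltN x) (ltN y') HD.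
  have E := rowu Hi Hj0 Hij0 Hj (covlt x) (ltN x) (ltN y) (ltN y') H Hc.
  by rewrite E.
- move=> x x' y; rewrite memD !inE /= => H HD.
  have Hc := covl HLr HLrow HLcol HLd Hi Hj0 Hij0 (ltN x') (ltN y) HD.
  have E := colu HLcol Hi Hj0 Hij0 Hj (covlt x') (ltN x) (ltN x') (ltN y) H Hc.
  by rewrite E.
- have [xa [ya [xb [yb [[? ? ? ?] ? Ea ? Eb]]]]] :=
    pieceab HLd Hi Hj0 Hij0 Hj (rowsurj Hj).
  exists (inord xa, inord ya); first by rewrite inE /= !inordK.
  by apply/eqP; rewrite -val_eqE /= psiE !inordK ?Ea ?Eb //; lia.
- have [xa [ya [xb [yb [[? ? ? ?] ? Ea ? Eb]]]]] :=
    pieceab HLd Hi Hj0 Hij0 Hj (rowsurj Hj).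
  exists (inord xb, inord yb); first by rewrite inE /= !inordK.
  by apply/eqP; rewrite -val_eqE /= psiE !inordK ?Ea ?Eb //; lia.
Qed.


Let r0 : 'I_N := inord (2 * j0).
Let r1 : 'I_N := inord (2 * j0 + 1).
Let e : 'I_N := inord (2 * m).

Lemma inPc x y : x <= 2 * m -> y <= 2 * m -> inH m j0 x y ->
  ((inord x : 'I_N), (inord y : 'I_N)) \in piece j0.
Proof. by move=> Hx Hy H; rewrite inE /= !inordK // /inP eqxx. Qed.

Lemma six q : q \in piece j0 ->
  q \in [:: (r0, r1); (r0, e); (r1, e); (r1, r0); (e, r0); (e, r1)].
Proof.
case: q => x y; rewrite inE /= /inP eqxx /inH.
have Hx := ltN x; have Hy := ltN y.
case/or4P => [/andP[/eqP X /eqP Y] | /andP[/eqP X /eqP Y]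
  | /andP[/orP[/eqP X|/eqP X] /eqP Y] | /andP[/eqP X /orP[/eqP Y|/eqP Y]]];
  rewrite (ordE _ X) ?(ordE _ Y); try lia;
  by rewrite !inE !xpair_eqE !eqxx ?orbT.
Qed.

Lemma piece_conn j : j < m -> forall S, is_component psi a b S ->
  forall p, p \in S -> p \in piece j -> piece j \subset S.
Proof.
move=> Hj S HS [x y] HpS Hp; apply/subsetP => -[x' y'] Hq.
case: (eqVneq j j0) => [Ej|nj]; last first.
  have Hr : (x, y') \in piece j.
    by move: Hp Hq; rewrite !inE /= => Hp Hq; apply: (rect Hj nj Hp Hq).
  have H1 : (x, y') \in S := closure_row psi_q HS HpS (pieceD Hj Hr).
  exact: (closure_col psi_q HS H1 (pieceD Hj Hq)).
subst j.
have c1 : (r0, r1) \in piece j0 by apply: inPc; rewrite /inH; lia.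
have c2 : (r0, e) \in piece j0 by apply: inPc; rewrite /inH; lia.
have c3 : (r1, e) \in piece j0 by apply: inPc; rewrite /inH; lia.
have c4 : (r1, r0) \in piece j0 by apply: inPc; rewrite /inH; lia.
have c5 : (e, r0) \in piece j0 by apply: inPc; rewrite /inH; lia.
have c6 : (e, r1) \in piece j0 by apply: inPc; rewrite /inH; lia.
have s12 : (r0, r1) \in S -> (r0, e) \in S.
  by move=> H; apply: (closure_row psi_q HS H (pieceD Hj0 c2)).
have s23 : (r0, e) \in S -> (r1, e) \in S.
  by move=> H; apply: (closure_col psi_q HS H (pieceD Hj0 c3)).
have s34 : (r1, e) \in S -> (r1, r0) \in S.
  by move=> H; apply: (closure_row psi_q HS H (pieceD Hj0 c4)).
have s45 : (r1, r0) \in S -> (e, r0) \in S.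
  by move=> H; apply: (closure_col psi_q HS H (pieceD Hj0 c5)).
have s56 : (e, r0) \in S -> (e, r1) \in S.
  by move=> H; apply: (closure_row psi_q HS H (pieceD Hj0 c6)).
have s61 : (e, r1) \in S -> (r0, r1) \in S.
  by move=> H; apply: (closure_col psi_q HS H (pieceD Hj0 c1)).
have C1 : (r0, r1) \in S.
  move: (six Hp); rewrite !inE => /or4P[|||/orP[|/orP[|]]] /eqP E; rewrite E in HpS.
  - exact: HpS.
  - exact: s61 (s56 (s45 (s34 (s23 HpS)))).
  - exact: s61 (s56 (s45 (s34 HpS))).
  - exact: s61 (s56 (s45 HpS)).
  - exact: s61 (s56 HpS).
  - exact: s61 HpS.
move: (six Hq); rewrite !inE => /or4P[|||/orP[|/orP[|]]] /eqP ->.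
- exact: C1.
- exact: s12 C1.
- exact: s23 (s12 C1).
- exact: s34 (s23 (s12 C1)).
- exact: s45 (s34 (s23 (s12 C1))).
- exact: s56 (s45 (s34 (s23 (s12 C1)))).
Qed.


Lemma valI k : k <= 2 * m -> nat_of_ord (inord k : 'I_N) = k.
Proof. by move=> Hk; rewrite inordK. Qed.

Lemma pair_result : #|components psi a b| = m /\
  exists2 C0, C0 \in components psi a b &
    ~ is_block C0 /\ forall C, C \in components psi a b -> C != C0 -> is_block C.
Proof.
have Heq : components psi a b = [set piece (nat_of_ord j) | j : 'I_m].
  apply: comps_eq.
  - exact: piece_isc.
  - exact: piece_conn.
  - move=> [x y]; rewrite memD /= => HD; exists (cov m j0 x); first exact: covlt.
    by rewrite inE /=; apply: (covl HLr HLrow HLcol HLd Hi Hj0 Hij0 (ltN x) (ltN y) HD).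
have inj : injective (fun j : 'I_m => piece j).
  move=> j j' /= E; apply: val_inj => /=.
  have [xa [ya [xb [yb [[? ? ? ?] Ha Ea ? Eb]]]]] :=
    pieceab HLd Hi Hj0 Hij0 (ltn_ord j) (rowsurj (ltn_ord j)).
  have : ((inord xa : 'I_N), (inord ya : 'I_N)) \in piece j' by rewrite -E inE /= !valI.
  rewrite inE /= !valI // => Ha'.
  exact: (rowu Hi Hj0 Hij0 (ltn_ord j) (ltn_ord j') _ _ _ Ha Ha').
split; first by rewrite Heq card_imset // card_ord.
exists (piece j0).
  by rewrite Heq; apply/imsetP; exists (Ordinal Hj0).
split.
  case=> J [L E]; have HL := ltn_ord L.
  have c2 : (r0, e) \in piece j0 by apply: inPc; rewrite /inH; lia.
  move: c2; rewrite E in_setX => /andP[_].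
  rewrite /pairset !inE -!val_eqE /= !valI; lia.
move=> C; rewrite Heq => /imsetP[j _ ->] nj.
have nj' : (nat_of_ord j) != j0 by apply: contra nj => /eqP ->.
have [l [Hl Hjl]] := rowsurj (ltn_ord j).
exists j, (Ordinal Hl); apply/setP => -[x y].
rewrite inE /= in_setX (blockE HLrow Hi Hj0 Hij0 x y (ltn_ord j) nj' Hl Hjl).
have Hx := ltN x; have Hy := ltN y; have Hj := ltn_ord j.
rewrite /pairset !inE -!val_eqE /= !valI; lia.
Qed.

End Pair.

Lemma main_gen : 0 < m -> exists psi : binop (2 * m).+1,
    is_quasigroup psi /\
    forall i : 'I_m,
      let a : 'I_(2 * m).+1 := inord (2 * i) in
      let b : 'I_(2 * m).+1 := inord (2 * i + 1) in
      #|components psi a b| = m /\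
      exists2 C0, C0 \in components psi a b &
        ~ is_block C0 /\
        forall C, C \in components psi a b -> C != C0 -> is_block C.
Proof.
move=> Hm; exists psi; split; first exact: psi_q.
move=> i a b.
have [j0 [Hj0 Ej0]] : exists j0, j0 < m /\ Ln j0 j0 = i.
  apply: (@nat_surj m (fun j => Ln j j)) => //.
  by move=> x Hx; apply: HLr.
exact: (pair_result (ltn_ord i) Hj0 Ej0).
Qed.

End Main.

Theorem proposition5 (m : nat) (hm : 3 <= m) :
  exists psi : binop (2 * m).+1,
    is_quasigroup psi /\
    forall i : 'I_m,
      let a : 'I_(2 * m).+1 := inord (2 * i) in
      let b : 'I_(2 * m).+1 := inord (2 * i + 1) in
      #|components psi a b| = m /\
      exists2 C0, C0 \in components psi a b &
        ~ is_block C0 /\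
        forall C, C \in components psi a b -> C != C0 -> is_block C.
Proof.
have Hm : 0 < m by lia.
case: (boolP (odd m)) => Ho.
  have Ek : m = 2 * m./2 + 1 by rewrite -{1}(odd_double_half m) Ho; lia.
  apply: (@main_gen m (Lodd m)) => //.
  - by move=> j l; apply: (Lodd_r Ek).
  - by move=> j l1 l2; apply: (Lodd_row Ek).
  - by move=> j1 j2 l; apply: (Lodd_col Ek).
  - by move=> j1 j2; apply: (Lodd_d Ek).
have En : m.-1 = 2 * (m.-1)./2 + 1.
  have : odd m.-1 by move: Ho; case: (m) Hm => //= n _; rewrite negbK.
  by move=> Hn; rewrite -{1}(odd_double_half m.-1) Hn; lia.
have Hk : 0 < (m.-1)./2 by lia.
have Em : m = (m.-1).+1 by lia.
move: En Hk Em; set n := m.-1 => En Hk Em.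
apply: (@main_gen m (Leven n)) => //.
- by move=> j l; rewrite Em; apply: (Leven_r En Hk).
- by move=> j l1 l2; rewrite Em; apply: (Leven_row En Hk).
- by move=> j1 j2 l; rewrite Em; apply: (Leven_col En Hk).
- by move=> j1 j2; rewrite Em; apply: (Leven_d En Hk).
Qed.
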